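(* Let $I$ be a BPPS instance with $d$ scenarios and let $\mathcal{B}$ be a minimal solution for $I$. Then $\mathrm{val}_{VBPP}(\mathcal{B})\le\sqrt{d}\,\mathrm{val}_{BPPS}(\mathcal{B})$, where $\mathrm{val}_{VBPP}(\mathcal{B})=|\mathcal{B}|$.
   Context: BPPS: given a number $d$ of scenarios, a set $\mathcal{I}=\{1,\dots,n\}$ of items, each item $i$ having a size $s_i\in\mathbb{Q}_+$ and a set of scenarios $\mathcal{K}_i\subseteq\{1,\dots,d\}$, and unlimited identical bins of capacity $1$ (instances are normalized so that the capacity is $1$). For each scenario $k$, $S_k=\{i\in\mathcal{I}: k\in\mathcal{K}_i\}$. A solution is a partition $\mathcal{B}$ of $\mathcal{I}$ (into nonempty parts, called bins) such that for every $B\in\mathcal{B}$ and every scenario $k$, $\sum_{i\in B\cap S_k}s_i\le 1$. Its value is $\mathrm{val}_{BPPS}(\mathcal{B})=\max_{k\in[d]}|\{B\in\mathcal{B}: B\cap S_k\neq\emptyset\}|$. A solution $\mathcal{B}$ is minimal if for any two distinct bins $A,B\in\mathcal{B}$ there is a scenario $k$ with $\sum_{i\in A\cap S_k}s_i+\sum_{i\in B\cap S_k}s_i>1$. *)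

(* Defs.v *)
From mathcomp Require Import all_boot all_order all_algebra.
Set Implicit Arguments. Unset Strict Implicit. Unset Printing Implicit Defensive.
Import Order.TTheory GRing.Theory Num.Theory.
Local Open Scope ring_scope.

(* A BPPS instance: n items ('I_n), d scenarios ('I_d), sizes s : 'I_n -> rat,
   scenario sets K : 'I_n -> {set 'I_d}. Capacity normalized to 1. *)

Definition load n d (s : 'I_n -> rat) (K : 'I_n -> {set 'I_d})
  (B : {set 'I_n}) (k : 'I_d) : rat :=
  \sum_(i in B | k \in K i) s i.

Definition is_solution n d (s : 'I_n -> rat) (K : 'I_n -> {set 'I_d})
  (P : {set {set 'I_n}}) : Prop :=
  partition P [set: 'I_n] /\
  (forall B k, B \in P -> load s K B k <= 1).

Definition val_BPPS n d (K : 'I_n -> {set 'I_d}) (P : {set {set 'I_n}}) : nat :=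
  \max_(k < d) #|[set B in P | [exists i in B, k \in K i]]|.

Definition val_VBPP n (P : {set {set 'I_n}}) : nat := #|P|.

(* minimality: no two distinct bins can be merged *)
Definition is_minimal n d (s : 'I_n -> rat) (K : 'I_n -> {set 'I_d})
  (P : {set {set 'I_n}}) : Prop :=
  forall A B, A \in P -> B \in P -> A != B ->
    exists k : 'I_d, load s K A k + load s K B k > 1.

(* Main.v *)
Require Import Defs.
From mathcomp Require Import all_boot all_order all_algebra.
From mathcomp Require Import lra.
Import Order.TTheory GRing.Theory Num.Theory.
Local Open Scope ring_scope.

Lemma load_meet n d (s : 'I_n -> rat) (K : 'I_n -> {set 'I_d}) (B : {set 'I_n}) (k : 'I_d) :
  0 < load s K B k -> [exists i in B, k \in K i].
Proof.
apply: contraTT => /existsPn H; rewrite -leNgt /load big1 // => i /andP[iB ik].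
by move: (H i); rewrite iB ik.
Qed.
Arguments load_meet {n d s K B k}.

Lemma card_bigcup_le (T : finType) d (F : 'I_d -> {set T}) :
  (#|\bigcup_(k < d) F k| <= \sum_(k < d) #|F k|)%N.
Proof.
elim/big_rec2: _ => [|k y X _ H]; first by rewrite cards0.
apply: leq_trans (leq_card_setU _ _) _.
by rewrite leq_add2l.
Qed.
Arguments card_bigcup_le {T d}.

Lemma sq_bound n d (s : 'I_n -> rat) (K : 'I_n -> {set 'I_d}) (P : {set {set 'I_n}})
  (hK : forall i, K i != set0)
  (hsol : is_solution s K P)
  (hmin : is_minimal s K P) :
  (#|P| * #|P| <= d * (val_BPPS K P * val_BPPS K P))%N.
Proof.
case: hsol => /and3P[_ _ P0] hcap.
pose M k := [set B in P | [exists i in B, k \in K i]].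
have sub : setX P P \subset \bigcup_(k < d) setX (M k) (M k).
  apply/subsetP => -[A B]; rewrite in_setX /= => /andP[AP BP].
  have [k Hk] : exists k, [exists i in A, k \in K i] && [exists i in B, k \in K i].
    case: (eqVneq A B) => [<-|AB].
      have : A != set0 by apply: contraNneq P0 => <-.
      case/set0Pn => i iA; case/set0Pn: (hK i) => k ik.
      by exists k; rewrite andbb; apply/existsP; exists i; rewrite iA ik.
    have [k Hk] := hmin A B AP BP AB; exists k.
    have hA := hcap A k AP; have hB := hcap B k BP.
    have lA : 0 < load s K A k by lra.
    have lB : 0 < load s K B k by lra.
    by rewrite (load_meet lA) (load_meet lB).
  by apply/bigcupP; exists k => //; rewrite in_setX !inE AP BP.
have := subset_leq_card sub; rewrite cardsX => /leq_trans; apply.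
apply: leq_trans (card_bigcup_le _) _.
rewrite -[X in (_ <= X * _)%N]card_ord -sum_nat_const.
apply: leq_sum => k _; rewrite cardsX.
by apply: leq_mul; apply: (leq_bigmax_cond k).
Qed.

Theorem theorem1 (R : rcfType) (n d : nat) (s : 'I_n -> rat)
  (K : 'I_n -> {set 'I_d}) (P : {set {set 'I_n}})
  (hs : forall i, 0 <= s i)
  (hK : forall i, K i != set0)
  (hsol : is_solution s K P)
  (hmin : is_minimal s K P) :
  (val_VBPP P)%:R <= Num.sqrt (d%:R : R) * (val_BPPS K P)%:R.
Proof.
have H := @sq_bound n d s K P hK hsol hmin.
rewrite /val_VBPP.
have sq : forall m : nat, (m%:R : R) = Num.sqrt ((m * m)%:R).
  by move=> m; rewrite natrM -expr2 sqrtr_sqr ger0_norm.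
rewrite [X in _ <= _ * X]sq [X in X <= _]sq -sqrtrM // ler_wsqrtr //.
by rewrite -natrM ler_nat.
Qed.
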